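(* For every integers $d \geq 2$ and $s \geq 1$, $\mathsf U_{d,s}\subseteq\mathsf O_{d,2s}$.
   Context: For integers $d\ge2$, $s\ge1$ and $U\in M_{ds}(\mathbb C)$ viewed as a $d\times d$ block matrix with blocks $U_{ij}\in M_s(\mathbb C)$, set $\phi_{d,s}(U)=\big(\tfrac1s\|U_{ij}\|_F^2\big)_{i,j=1}^d$ with $\|X\|_F=\operatorname{Tr}(XX^* )^{1/2}$. Define $\mathsf U_{d,s}:=\phi_{d,s}(\mathcal U(ds))$, where $\mathcal U(n)$ is the unitary group, and $\mathsf O_{d,s}:=\phi_{d,s}(\mathcal O(ds))$, where $\mathcal O(n)$ is the group of $n\times n$ real orthogonal matrices. *)

(* Defs.v *)
From HB Require Import structures.
From mathcomp Require Import all_boot all_order all_algebra.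
From mathcomp Require Import spectral.
From mathcomp Require Import complex.
From mathcomp Require Import reals.
Set Implicit Arguments. Unset Strict Implicit. Unset Printing Implicit Defensive.
Import Order.TTheory GRing.Theory Num.Theory.
Local Open Scope ring_scope.

Lemma blk_ord_proof (d s : nat) (i : 'I_d) (k : 'I_s) : (i * s + k < d * s)%N.
Proof.
have hi := ltn_ord i; have hk := ltn_ord k.
apply: (@leq_trans (i.+1 * s)%N); first by rewrite mulSn [X in (_ < X)%N]addnC ltn_add2l.
by rewrite leq_mul2r hi orbT.
Qed.

Definition blk_ord (d s : nat) (i : 'I_d) (k : 'I_s) : 'I_(d * s) :=
  Ordinal (blk_ord_proof i k).

Definition phi (C : numDomainType) (d s : nat) (U : 'M[C]_(d * s)) : 'M[C]_d :=
  \matrix_(i < d, j < d)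
    (s%:R^-1 * \sum_(k < s) \sum_(l < s) `|U (blk_ord i k) (blk_ord j l)| ^+ 2).

Definition orthogonal_mx (R : realType) (n : nat) (O : 'M[R]_n) : Prop :=
  O *m O^T = 1%:M.

Definition real_to_complex (R : realType) (x : R) : R[i] := Complex x 0.

Definition in_Uds (R : realType) (d s : nat) (P : 'M[R[i]]_d) : Prop :=
  exists U : 'M[R[i]]_(d * s), U \is unitarymx /\ phi U = P.

Definition in_Ods (R : realType) (d s : nat) (P : 'M[R[i]]_d) : Prop :=
  exists O : 'M[R]_(d * s), orthogonal_mx O /\
    map_mx (@real_to_complex R) (phi O) = P.

(* Main.v *)
Require Import Defs.
From HB Require Import structures.
From mathcomp Require Import all_boot all_order all_algebra.
From mathcomp Require Import spectral complex reals.
From mathcomp Require Import zify ring lra.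
Import Order.TTheory GRing.Theory Num.Theory.
Local Open Scope ring_scope.

Lemma sum_blocks (V : zmodType) (d k : nat) (g : nat -> V) :
  \sum_(0 <= r < d * k) g r = \sum_(0 <= j < d) \sum_(0 <= t < k) g (j * k + t)%N.
Proof.
elim: d => [|d IH]; first by rewrite mul0n !big_geq.
rewrite big_nat_recr //= -IH mulSn addnC (big_cat_nat _ (n:=d*k)) ?leq_addr //=.
congr (_ + _).
rewrite -{1}[(d * k)%N]add0n big_addn addKn; apply: eq_bigr => i _; by rewrite addnC.
Qed.

Lemma split2 (V : zmodType) (s : nat) (g : nat -> V) :
  \sum_(0 <= t < 2 * s) g t = \sum_(0 <= t < s) g t + \sum_(0 <= t < s) g (t + s)%N.
Proof.
rewrite (big_cat_nat _ (n:=s)) //=; last by rewrite mul2n -addnn leq_addr.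
by rewrite -{2}[s]add0n big_addn mul2n -addnn addnK.
Qed.

Definition ai (s p : nat) : nat := (p %/ (2 * s) * s + p %% (2 * s) %% s)%N.
Definition pt (s p : nat) : bool := (s <= p %% (2 * s))%N.

Section Nat.
Variable s : nat.
Hypothesis s0 : (0 < s)%N.

Lemma s2 : (0 < 2 * s)%N. Proof. by rewrite muln_gt0. Qed.

Lemma ai_lo j t : (t < s)%N -> ai s (j * (2 * s) + t) = (j * s + t)%N.
Proof.
move=> ts; have t2 : (t < 2 * s)%N by rewrite mul2n -addnn ltn_addr.
rewrite /ai divnMDl ?s2 // modnMDl divn_small // modn_small // modn_small //.
by rewrite addn0.
Qed.

Lemma ai_hi j t : (t < s)%N -> ai s (j * (2 * s) + (t + s)) = (j * s + t)%N.
Proof.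
move=> ts; have t2 : (t + s < 2 * s)%N by rewrite mul2n -addnn ltn_add2r.
rewrite /ai divnMDl ?s2 // modnMDl (divn_small t2) (modn_small t2) modnDr (modn_small ts).
by rewrite addn0.
Qed.

Lemma pt_lo j t : (t < s)%N -> pt s (j * (2 * s) + t) = false.
Proof.
move=> ts; have t2 : (t < 2 * s)%N by rewrite mul2n -addnn ltn_addr.
by rewrite /pt modnMDl modn_small // leqNgt ts.
Qed.

Lemma pt_hi j t : (t < s)%N -> pt s (j * (2 * s) + (t + s)) = true.
Proof.
move=> ts; have t2 : (t + s < 2 * s)%N by rewrite mul2n -addnn ltn_add2r.
by rewrite /pt modnMDl modn_small // leq_addl.
Qed.

Lemma recon p : p = (ai s p %/ s * (2 * s) + ai s p %% s + pt s p * s)%N.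
Proof.
have rs := ltn_pmod p s2.
have r's : (p %% (2 * s) %% s < s)%N by rewrite ltn_pmod.
rewrite /ai divnMDl // modnMDl modn_mod (divn_small r's) addn0.
rewrite {1}(divn_eq p (2 * s)) -addnA; congr (_ + _)%N.
rewrite /pt; set r := (p %% (2 * s))%N in rs r's *.
case: leqP => h /=.
- have -> : r = ((r - s) + s)%N by rewrite subnK.
  rewrite modnDr modn_small; first by rewrite mul1n.
  by rewrite ltn_subLR // addnn -mul2n.
- by rewrite modn_small // mul0n addn0.
Qed.

Lemma ai_lt d p : (p < d * (2 * s))%N -> (ai s p < d * s)%N.
Proof.
move=> pd.
have q : (p %/ (2 * s) < d)%N by rewrite ltn_divLR ?s2.
have r's : (p %% (2 * s) %% s < s)%N by rewrite ltn_pmod.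
rewrite /ai; move: q r's; set a := (p %/ (2 * s))%N; set b := (_ %% s)%N.
move=> q r; nia.
Qed.
End Nat.

Section Main.
Variable R : realType.

Definition ext {n : nat} (U : 'M[R[i]]_n) (a b : nat) : R[i] :=
  oapp (fun x : 'I_n => oapp (fun y : 'I_n => U x y) 0 (insub b)) 0 (insub a).

Lemma ext_val n (U : 'M[R[i]]_n) (x y : 'I_n) : ext U x y = U x y.
Proof. by rewrite /ext !valK. Qed.

Definition T (b1 b2 : bool) (z : R[i]) : R :=
  if b1 then (if b2 then complex.Re z else complex.Im z)
  else (if b2 then - complex.Im z else complex.Re z).

Lemma T_add b1 b2 : {morph T b1 b2 : x y / x + y}.
Proof. by move=> [a b] [c e]; case: b1; case: b2 => //=; rewrite opprD. Qed.

Lemma T0 b1 b2 : T b1 b2 0 = 0.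
Proof. by case: b1; case: b2 => //=; rewrite oppr0. Qed.

Lemma T_pt b1 b2 (x y : R[i]) :
  T b1 false x * T b2 false y + T b1 true x * T b2 true y
  = T b1 b2 (x * Num.conj y).
Proof.
case: x => a b; case: y => c e.
case: b1; case: b2 => /=; ring.
Qed.

Lemma T_sq (x : R[i]) :
  T false false x ^+ 2 + T false true x ^+ 2 + (T true false x ^+ 2 + T true true x ^+ 2)
  = 2 * (complex.Re x ^+ 2 + complex.Im x ^+ 2).
Proof. case: x => a b /=; ring. Qed.

End Main.
Arguments T {R}.
Arguments ext {R n}.
Arguments ext_val {R n}.

Lemma blkE d s (i : 'I_d) (k : 'I_s) : nat_of_ord (blk_ord i k) = (i * s + k)%N.
Proof. by []. Qed.

Theorem proposition4p2 (R : realType) (d s : nat) (hd : (2 <= d)%N) (hs : (1 <= s)%N)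
  (P : 'M[R[i]]_d) : @in_Uds R d s P -> @in_Ods R d (2 * s) P.
Proof.
case=> U [/unitarymxP Uu <-].
have s0 : (0 < s)%N := hs.
pose f p q := T (pt s p) (pt s q) (ext U (ai s p) (ai s q)).
exists (\matrix_(p < d * (2 * s), q < d * (2 * s)) f p q).
split.
- apply/matrixP => p q; rewrite !mxE.
  under eq_bigr do rewrite !mxE.
  rewrite -(big_mkord xpredT (fun r => f p r * f q r)).
  rewrite sum_blocks.
  under eq_bigr do rewrite split2 -big_split /=.
  have xp := @ai_lt s s0 d p (ltn_ord p); have xq := @ai_lt s s0 d q (ltn_ord q).
  pose Xp : 'I_(d * s) := Ordinal xp; pose Xq : 'I_(d * s) := Ordinal xq.
  transitivity (T (pt s p) (pt s q) (\sum_(0 <= j < d) \sum_(0 <= t < s)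
     ext U (ai s p) (j * s + t) * Num.conj (ext U (ai s q) (j * s + t)))).
    rewrite (big_morph _ (@T_add R _ _) (@T0 R _ _)); apply: eq_bigr => j _.
    rewrite (big_morph _ (@T_add R _ _) (@T0 R _ _)).
    rewrite big_nat_cond [RHS]big_nat_cond; apply: eq_bigr => t /andP[/andP[_ ts] _].
    by rewrite /f ai_lo // ai_hi // pt_lo // pt_hi // T_pt.
  rewrite -(@sum_blocks _ d s (fun c => ext U (ai s p) c * Num.conj (ext U (ai s q) c))) big_mkord.
  under eq_bigr do rewrite (ext_val U Xp) (ext_val U Xq).
  have := congr1 (fun M : 'M[R[i]]_(d * s) => M Xp Xq) Uu; move=> /=; rewrite mxE (eq_bigr (fun j => U Xp j * Num.conj (U Xq j))); last first.
    by move=> j _; rewrite !mxE.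
  rewrite mxE => ->.
  case: (eqVneq p q) => [pq|npq].
    have -> : (Xp == Xq) = true by apply/eqP; apply: val_inj => /=; rewrite pq.
    rewrite pq.
    by case: (pt s q).
  case: (eqVneq (pt s p) (pt s q)) => hpt.
    have -> : (Xp == Xq) = false.
      apply/negbTE; apply: contra npq => /eqP H; apply/eqP; apply: val_inj.
      rewrite /= (recon _ s0 p) (recon _ s0 q) hpt.
      by have /= -> : ai s p = ai s q := congr1 val H.
    by rewrite T0.
  move: hpt; case: (pt s p); case: (pt s q) => //= _; case: (Xp == Xq) => /=; rewrite ?oppr0 //.
- apply/matrixP => i j; rewrite !mxE.
  pose S := \sum_(0 <= k < s) \sum_(0 <= l < s)
     (complex.Re (ext U (i * s + k) (j * s + l)) ^+ 2 + complex.Im (ext U (i * s + k) (j * s + l)) ^+ 2).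
  have HL : \sum_(0 <= k < 2 * s) \sum_(0 <= l < 2 * s) f (i * (2 * s) + k)%N (j * (2 * s) + l)%N ^+ 2 = 2 * S.
    rewrite split2; under eq_bigr do rewrite split2.
    under [X in _ + X = _]eq_bigr do rewrite split2.
    rewrite -big_split mulr_sumr big_nat_cond [RHS]big_nat_cond.
    apply: eq_bigr => k /andP[/andP[_ ks] _].
    rewrite -!big_split mulr_sumr /= big_nat_cond [RHS]big_nat_cond.
    apply: eq_bigr => l /andP[/andP[_ ls] _].
    by rewrite /f /= !ai_hi // !ai_lo // !pt_hi // !pt_lo // T_sq.
  under eq_bigr do under eq_bigr do rewrite mxE real_normK ?num_real // !blkE.
  under eq_bigr => k _ do rewrite -(big_mkord xpredT (fun l => f (i*(2*s)+k)%N (j*(2*s)+l)%N ^+ 2)).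
  rewrite -(big_mkord xpredT (fun k => \sum_(0 <= l < 2 * s) f (i*(2*s)+k)%N (j*(2*s)+l)%N ^+ 2)) HL.
  have HR : \sum_(k < s) \sum_(l < s) `|U (blk_ord i k) (blk_ord j l)| ^+ 2 = real_complex R S.
    rewrite /S big_mkord rmorph_sum; apply: eq_bigr => k _.
    rewrite big_mkord rmorph_sum; apply: eq_bigr => l _.
    by rewrite -add_Re2_Im2 -ext_val !blkE.
  rewrite HR (_ : real_to_complex (R:=R) = real_complex R) //.
  rewrite rmorphM fmorphV rmorphM !rmorph_nat natrM.
  have sn : (s%:R : R[i]) != 0 by rewrite pnatr_eq0 -lt0n.
  by field.
Qed.
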